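(* Let $k=k(x)\ge2$ and $t=t(x)\ge1$ be functions of $x$ ($t$ integer-valued), and let $m$ be a uniformly random integer in $[1,x]$. Then \[ \mathbb{P}\big(\forall\,0\le i<t\ \exists\text{ prime }p_i>k\text{ with }v_{p_i}(m-i)=1\big)=1-O\Big(\frac{t\log k}{\log x}+\frac tk\Big), \] with an absolute implied constant.
   Context: $v_p$ denotes the $p$-adic valuation on the integers. *)

(* Defs.v *)
From Stdlib Require Import Reals ClassicalEpsilon ZArith.
From mathcomp Require Import all_boot.

(* p-adic valuation of an integer z: v_p(z) = v_p(|z|); with logn p 0 = 0,
   so v_p(0) is never 1 (matching v_p(0) = +oo). *)
Definition vp (p : nat) (z : Z) : nat := logn p (Z.abs_nat z).

Definition good (k : R) (t m : nat) : Prop :=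
  forall i : nat, (i < t)%N ->
    exists p : nat, prime p /\ Rlt k (INR p) /\ vp p (Z.of_nat m - Z.of_nat i)%Z = 1%N.

Definition indic (P : Prop) : R :=
  if excluded_middle_informative P then R1 else R0.

(* Probability that a uniform random integer m in [1, x] satisfies P,
   where N = floor x (the number of integers in [1, x]). *)
Definition unif_prob (N : nat) (P : nat -> Prop) : R :=
  Rdiv (foldr Rplus R0 (map (fun m => indic (P m)) (iota 1 N))) (INR N).

(* Main.v *)
Require Import Defs.
From Stdlib Require Import Reals ZArith.
From mathcomp Require Import all_boot.
From Stdlib Require Import Lia Lra ClassicalEpsilon.
From mathcomp Require Import zify.

Lemma count_le_or (T : eqType) (a b c : pred T) (s : seq T) :
  (forall x, x \in s -> a x -> b x || c x) -> count a s <= count b s + count c s.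
Proof.
elim: s => //= x s IH H.
have IH' : count a s <= count b s + count c s.
  by apply: IH => y ys; apply: H; rewrite inE ys orbT.
case ax: (a x); last by rewrite add0n; apply: (leq_trans IH'); lia.
have := H x (mem_head _ _) ax; case: (b x); case: (c x) => //= _; lia.
Qed.

Lemma count_has_le (T : eqType) (P : nat -> pred T) (l : seq nat) (s : seq T) :
  count (fun m => has (fun i => P i m) l) s <= \sum_(i <- l) count (P i) s.
Proof.
elim: l => [|i l IH]; first by rewrite big_nil; elim: s.
rewrite big_cons; apply: leq_trans (leq_add (leqnn _) IH).
by apply: count_le_or => x _.
Qed.

Lemma sum_le_const (l : seq nat) (f : nat -> nat) c :
  (forall i, i \in l -> f i <= c) -> \sum_(i <- l) f i <= size l * c.
Proof.
elim: l => [|i l IH] H; first by rewrite big_nil.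
rewrite big_cons /= mulSn; apply: leq_add; first by apply: H; rewrite inE eqxx.
by apply: IH => j jl; apply: H; rewrite inE jl orbT.
Qed.

Lemma count_iota_mono (b : pred nat) N : count b (iota 1 N) <= count b (iota 1 N.+1).
Proof. by rewrite -[N.+1]addn1 iotaD count_cat; apply: leq_addr. Qed.

Lemma count_shift (b : pred nat) i N :
  count (fun m => b (m - i)) (iota 1 N) <= i + count b (iota 1 N).
Proof.
elim: i N => [|i IH] N.
  by rewrite add0n; apply: eq_leq; apply: eq_count => m; rewrite subn0.
set r := count b (iota 1 N).
have Hr : forall N', N' <= N -> count b (iota 1 N') <= r.
  move=> N' le; rewrite /r -(subnKC le) iotaD count_cat; apply: leq_addr.
rewrite -{1}[1]addn0 iotaDl count_map.
rewrite (@eq_count _ _ (fun m => b (m - i))); last first.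
  by move=> m /=; rewrite add1n subSS.
clearbody r; case: N Hr => [|N] Hr //=.
apply: leq_trans (leq_add (leq_b1 _) (IH N)) _.
have := Hr N (leqnSn N); lia.
Qed.

Lemma count_dvd d N : 0 < d -> count (fun n => d %| n) (iota 1 N) = N %/ d.
Proof.
move=> d0; elim: N => [|N IH]; first by rewrite div0n.
rewrite -[N.+1]addn1 iotaD count_cat IH /= add1n addn0 addn1 divnS // addnC.
by rewrite -[N.+1]addn1.
Qed.

Lemma step_ineq x y K N : 0 < K -> x * (K.+1 * K.+1) <= N -> y * K.+1 <= N -> (x + y) * K <= N.
Proof.
move=> K0 h1 h2.
rewrite -(@leq_pmul2r (K.+1 * K.+1)) //.
nia.
Qed.

Lemma sq_sum N L K : 0 < K -> \sum_(j <- iota K.+1 L) N %/ (j ^ 2) <= N %/ K.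
Proof.
elim: L K => [|L IH] K K0; first by rewrite big_nil.
rewrite /= big_cons.
have := IH K.+1 (ltn0Sn _).
move=> h; rewrite leq_divRL //.
apply: leq_trans (leq_mul (leq_add (leqnn _) h) (leqnn K)) _.
apply: step_ineq => //.
  by rewrite -leq_divRL ?muln_gt0 // expnS expn1.
by rewrite -leq_divRL.
Qed.

Lemma leg_inv p N L : 0 < p ->
  p * (\sum_(k <- iota 1 L) N %/ p ^ k) + N %/ p ^ L <= N + \sum_(k <- iota 1 L) N %/ p ^ k.
Proof.
move=> p0; elim: L => [|L IH]; first by rewrite big_nil expn0 divn1 muln0 add0n addn0.
rewrite -[L.+1]addn1 iotaD big_cat /= big_cons big_nil addn0 add1n.
have h : N %/ p ^ L.+1 * p <= N %/ p ^ L by rewrite expnSr divnMA leq_divM.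
move: IH h; set T := \sum_(k <- iota 1 L) N %/ p ^ k; set a := N %/ p ^ L; set b := N %/ p ^ L.+1.
lia.
Qed.

Lemma leg_upper p N : prime p -> (p - 1) * logn p N`! <= N.
Proof.
move=> pp; rewrite logn_fact // /index_iota subSS subn0.
have := leg_inv p N N (prime_gt0 pp).
set T := \sum_(k <- iota 1 N) N %/ p ^ k; set a := N %/ p ^ N.
move=> h; rewrite mulnBl mul1n; lia.
Qed.

Lemma leg_lower p K : prime p -> K %/ p <= logn p K`!.
Proof.
move=> pp; rewrite logn_fact //.
case: K => [|K]; first by rewrite div0n.
rewrite /index_iota subn1 /= big_cons expn1; apply: leq_addr.
Qed.

Lemma key_log p K N : prime p -> p <= K -> K * logn p N`! <= 4 * N * logn p K`!.
Proof.
move=> pp pK.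
have h1 := leg_upper p N pp; have h2 := leg_lower p K pp.
have p1 := prime_gt1 pp.
have h3 : K < p * (K %/ p).+1.
  have := divn_eq K p; have := ltn_mod K p; rewrite prime_gt0 //.
  set q := K %/ p; set r := K %% p; nia.
have h4 : 1 <= K %/ p by rewrite divn_gt0 ?prime_gt0.
move: h1 h2 h3 h4; set L := logn p N`!; set LK := logn p K`!; set q := K %/ p.
move=> h1 h2 h3 h4.
have e1 : K * L <= (2 * p * q) * L by apply: leq_mul => //; nia.
have e2 : (2 * p * q) * L <= (2 * p * LK) * L by apply: leq_mul => //; apply: leq_mul.
have e3 : (2 * p * LK) * L <= (4 * (p - 1) * L) * LK.
  rewrite mulnAC; apply: leq_mul => //; apply: leq_mul => //; lia.
have e4 : (4 * (p - 1) * L) * LK <= 4 * N * LK.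
  apply: leq_mul => //; rewrite -mulnA; apply: leq_mul => //.
lia.
Qed.

Lemma fact_le_pow K : K`! <= K ^ K.
Proof.
elim: K => [|K IH] //; rewrite factS expnS; apply: leq_mul => //.
apply: leq_trans IH _; case: K => [|K] //; rewrite leq_exp2r //.
Qed.

Lemma dvdn_log a b : 0 < a -> 0 < b -> (forall p, prime p -> logn p a <= logn p b) -> a %| b.
Proof.
move=> a0 b0 H; apply/dvdn_partP => // p.
rewrite mem_primes => /and3P[pp _ _]; rewrite p_part pfactor_dvdn //; exact: H.
Qed.

Lemma prod_ge (a : pred nat) M s : (forall n, n \in s -> M < n) ->
  M.+1 ^ (count a s) <= \prod_(n <- s | a n) n.
Proof.
elim: s => [|x s IH] H; first by rewrite big_nil.
rewrite big_cons /=.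
have IH' : M.+1 ^ count a s <= \prod_(n <- s | a n) n by apply: IH => n ns; apply: H; rewrite inE ns orbT.
have Hx : M < x by apply: H; rewrite inE eqxx.
case: (a x) => /=; last by rewrite add0n.
by rewrite add1n expnS; apply: leq_mul.
Qed.

Lemma prod_filter_dvd (a : pred nat) s : \prod_(n <- s | a n) n %| \prod_(n <- s) n.
Proof.
elim: s => [|x s IH]; first by rewrite !big_nil.
rewrite !big_cons; case: (a x); first by apply: dvdn_mul.
by apply: dvdn_mull.
Qed.

Lemma prod_notdvd p (a : pred nat) s : prime p ->
  (forall n, n \in s -> a n -> ~~ (p %| n)) -> ~~ (p %| \prod_(n <- s | a n) n).
Proof.
move=> pp; elim: s => [|x s IH] H; first by rewrite big_nil dvdn1; case: eqP pp => // ->.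
rewrite big_cons; case ax: (a x).
  rewrite Euclid_dvdM // negb_or; apply/andP; split; first by apply: H => //; rewrite inE eqxx.
  by apply: IH => n ns; apply: H; rewrite inE ns orbT.
by apply: IH => n ns; apply: H; rewrite inE ns orbT.
Qed.

Definition smb (K n : nat) : bool := all (fun p => p <= K) (primes n).

Lemma smooth_bound M N K : M <= N -> 1 < K ->
  M.+1 ^ (count (smb K) (iota M.+1 (N - M))) <= K ^ (4 * N).
Proof.
move=> MN K1.
set s := iota M.+1 (N - M).
have spos : forall n, n \in s -> M < n by move=> n; rewrite mem_iota => /andP[].
apply: (leq_trans (prod_ge (smb K) M s spos)).
set A := \prod_(n <- s | smb K n) n.
have A0 : 0 < A.
  by apply: leq_trans (prod_ge (smb K) M s spos); rewrite expn_gt0.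
have AN : A %| N`!.
  rewrite fact_prod /index_iota subSS subn0 -(subnKC MN) iotaD big_cat /=.
  by apply: dvdn_mull; rewrite add1n; apply: prod_filter_dvd.
have AK : A ^ K %| (K`!) ^ (4 * N).
  apply: dvdn_log; rewrite ?expn_gt0 ?A0 ?fact_gt0 // => p pp.
  rewrite !lognX.
  case: (leqP p K) => pK.
    apply: (leq_trans _ (key_log p K N pp pK)); rewrite leq_mul2l; apply/orP; right.
    by apply: dvdn_leq_log => //; apply: fact_gt0.
  have -> : logn p A = 0.
    apply/eqP; rewrite -leqn0 leqNgt logn_gt0 mem_primes pp A0 /=.
    apply: prod_notdvd => // n ns sn; apply/negP => pn.
    have n0 : 0 < n by have := spos n ns; case: n {ns sn pn}.
    move/allP: sn => /(_ p); rewrite mem_primes pp n0 pn => /(_ isT).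
    by rewrite leqNgt pK.
  by rewrite muln0.
have K0 : 0 < K by apply: ltnW.
rewrite -(@leq_exp2r _ _ K) //; apply: leq_trans (dvdn_leq _ AK) _.
  by rewrite expn_gt0 fact_gt0.
apply: (@leq_trans ((K ^ K) ^ (4 * N))); first by case: (posnP N) => [->|N0] //; rewrite leq_exp2r ?muln_gt0 ?N0 ?fact_le_pow.
by rewrite -!expnM mulnC.
Qed.

Definition badb (K n : nat) : bool := ~~ has (fun p => (K < p) && (logn p n == 1)) (primes n).
Definition sqb (K N n : nat) : bool := has (fun j => j ^ 2 %| n) (iota K.+1 N).
Definition notgoodb (K t m : nat) : bool := has (fun i => badb K (m - i)) (iota 0 t).

Lemma bad_split K N n : 0 < n -> n <= N -> badb K n -> sqb K N n || smb K n.
Proof.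
move=> n0 nN bn; case sm: (smb K n); first by rewrite orbT.
rewrite orbF; move/negbT: sm; rewrite /smb => /allPn[p pin]; rewrite -ltnNge => Kp.
apply/hasP; exists p.
  rewrite mem_iota Kp /=; have := mem_primes p n; rewrite pin => /esym/and3P[_ _ pn].
  have := dvdn_leq n0 pn; lia.
have pp : prime p by move: pin; rewrite mem_primes => /andP[].
rewrite pfactor_dvdn //.
have h1 : 0 < logn p n by rewrite logn_gt0.
have h2 : logn p n != 1.
  apply/negP => /eqP e; move: bn; rewrite /badb => /hasPn/(_ p pin); rewrite Kp e eqxx.
  done.
lia.
Qed.

Lemma count_bad K N M : 0 < K -> M <= N ->
  count (badb K) (iota 1 N) <= N %/ K + M + count (smb K) (iota M.+1 (N - M)).
Proof.
move=> K0 MN.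
apply: leq_trans (@count_le_or _ (badb K) (sqb K N) (smb K) _ _) _.
  by move=> x; rewrite mem_iota => /andP[h1 h2]; apply: bad_split => //; lia.
rewrite -addnA; apply: leq_add.
  apply: (@leq_trans (\sum_(j <- iota K.+1 N) count (fun n => j ^ 2 %| n) (iota 1 N))).
    exact: (count_has_le _ (fun j n => j ^ 2 %| n) (iota K.+1 N) (iota 1 N)).
  apply: leq_trans (sq_sum N N K K0); apply: eq_leq; rewrite big_seq_cond [RHS]big_seq_cond.
  apply: eq_bigr => j; rewrite andbT mem_iota => /andP[h _]; apply: count_dvd.
  by rewrite expn_gt0; case: j h.
rewrite -{1}(subnKC MN) iotaD count_cat add1n; apply: leq_add => //.
by apply: leq_trans (count_size _ _) _; rewrite size_iota.
Qed.

Lemma count_notgood K t N M : 0 < K -> M <= N ->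
  count (notgoodb K t) (iota 1 N) <= t * (t + (N %/ K + M + count (smb K) (iota M.+1 (N - M)))).
Proof.
move=> K0 MN.
apply: leq_trans (count_has_le _ (fun i m => badb K (m - i)) _ _) _.
set c := (t + (N %/ K + M + count (smb K) (iota M.+1 (N - M)))).
apply: (@leq_trans (size (iota 0 t) * c)); last by rewrite size_iota.
apply: sum_le_const => i; rewrite mem_iota add0n => /andP[_ it].
apply: leq_trans (count_shift _ _ _) _; apply: leq_add; first exact: ltnW.
exact: count_bad.
Qed.
Open Scope R_scope.

Lemma floor_ex (k : R) : Rle (INR 2) k -> exists K : nat, (2 <= K)%N /\ Rle (INR K) k /\ Rlt k (Rplus (INR K) R1).
Proof.
move=> hk; have [h1 h2] := archimed k.
have e2 : INR 2 = 2 by simpl; ring.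
have hz : (3 <= up k)%Z.
  suff : (2 < up k)%Z by lia.
  apply: lt_IZR; rewrite e2 in hk; lra.
exists (Z.to_nat (up k - 1)).
have e : INR (Z.to_nat (up k - 1)) = (IZR (up k) - 1).
  rewrite INR_IZR_INZ Z2Nat.id; first by rewrite minus_IZR.
  lia.
split; first by apply/leP; lia.
rewrite e; lra.
Qed.

Lemma notgood_good (k : R) K t m : Rle (INR K) k -> Rlt k (Rplus (INR K) R1) ->
  ~~ notgoodb K t m -> good k t m.
Proof.
move=> hK1 hK2 /hasPn H i it.
have := H i; rewrite mem_iota add0n it => /(_ isT); rewrite /badb negbK => /hasP[p pin /andP[Kp /eqP lp]].
move: (pin); rewrite mem_primes => /and3P[pp mi0 _].
exists p; split => //; split.
  have : (K.+1 <= p)%coq_nat by apply/leP.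
  move/le_INR; rewrite S_INR; lra.
rewrite /vp.
have -> : Z.abs_nat (Z.of_nat m - Z.of_nat i) = (m - i)%N by lia.
exact: lp.
Qed.

Lemma sum_indic_bounds (nb : pred nat) (f : nat -> R) (s : seq nat) :
  (forall m, Rle R0 (f m) /\ Rle (f m) R1) -> (forall m, ~~ nb m -> f m = R1) ->
  Rle (INR (size s) - INR (count nb s)) (foldr Rplus R0 (map f s)) /\
  Rle (foldr Rplus R0 (map f s)) (INR (size s)).
Proof.
move=> hf hnb; elim: s => [|x s [IH1 IH2]]; first by rewrite /=; split; lra.
have [f0 f1] := hf x.
have -> : foldr Rplus R0 (map f (x :: s)) = f x + foldr Rplus R0 (map f s) by [].
have -> : size (x :: s) = (size s).+1 by [].
have -> : count nb (x :: s) = (nb x + count nb s)%N by [].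
rewrite S_INR; case nx: (nb x).
  rewrite add1n S_INR; split; lra.
rewrite hnb ?nx // add0n; split; lra.
Qed.

Lemma INR_addn a b : INR (a + b)%N = INR a + INR b.
Proof. exact: plus_INR. Qed.
Lemma INR_muln a b : INR (a * b)%N = INR a * INR b.
Proof. exact: mult_INR. Qed.
Lemma INR_expn a b : INR (a ^ b)%N = INR a ^ b.
Proof. elim: b => [|b IH] //=; by rewrite expnS INR_muln IH. Qed.
Lemma INR_leq a b : (a <= b)%N -> INR a <= INR b.
Proof. by move/leP; apply: le_INR. Qed.

Lemma ln_le' a b : 0 < a -> a <= b -> ln a <= ln b.
Proof. move=> a0 [ab|->]; [left; apply: ln_increasing | right] => //. Qed.

Lemma le_div_helper a b n : 0 < n -> a * n <= b -> a <= b / n.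
Proof.
move=> n0 h; have -> : a = (a * n) / n by field; lra.
by apply: Rmult_le_compat_r => //; left; apply: Rinv_0_lt_compat.
Qed.

Lemma div_le_helper a b n : 0 < n -> a <= b * n -> a / n <= b.
Proof.
move=> n0 h; have -> : b = (b * n) / n by field; lra.
by apply: Rmult_le_compat_r => //; left; apply: Rinv_0_lt_compat.
Qed.

Theorem corollary4p3 :
  exists C : R, Rlt R0 C /\
    forall (x k : R) (t N : nat),
      Rle (INR 2) x ->
      Rle (INR N) x -> Rlt x (Rplus (INR N) R1) ->
      Rle (INR 2) k ->
      (1 <= t)%N ->
      Rle (Rabs (Rminus (unif_prob N (good k t)) R1))
          (Rmult C (Rplus (Rdiv (Rmult (INR t) (ln k)) (ln x)) (Rdiv (INR t) k))).
Proof.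
exists 20; split; first lra.
move=> x k t N hx hN1 hN2 hk ht.
have [K [K2 [hK1 hK2]]] := floor_ex k hk.
have e2 : INR 2 = 2 by simpl; ring.
rewrite e2 in hx hk.
have N2 : (2 <= N)%N.
  have : (1 < N)%coq_nat by apply: INR_lt; rewrite /=; lra.
  by move/ltP.
have nR : 0 < INR N by apply: lt_0_INR; apply/ltP; lia.
set G := count (notgoodb K t) (iota 1 N).
set S := foldr Rplus R0 (map (fun m => indic (good k t m)) (iota 1 N)).
have hS : INR N - INR G <= S <= INR N.
  rewrite -(size_iota 1 N); apply: sum_indic_bounds.
    by move=> m; rewrite /indic; destruct (excluded_middle_informative (good k t m)); simpl; lra.
  move=> m hm; rewrite /indic; destruct (excluded_middle_informative (good k t m)) as [|hg] => //.
  simpl.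
  by case: hg; apply: (notgood_good k K t m).
have hP : Rabs (unif_prob N (good k t) - R1) <= INR G / INR N.
  rewrite Rabs_minus_sym Rabs_pos_eq /unif_prob -/S.
    have -> : 1 - S / INR N = (INR N - S) / INR N by field; lra.
    by apply: Rmult_le_compat_r; [left; apply: Rinv_0_lt_compat | lra].
  have -> : 1 - S / INR N = (INR N - S) / INR N by field; lra.
  by apply: Rle_mult_inv_pos => //; lra.
have GN : INR G <= INR N.
  by apply: INR_leq; have := count_size (notgoodb K t) (iota 1 N); rewrite size_iota.
have lx0 : / 2 < ln x.
  apply: Rlt_le_trans ln_lt_2 _; apply: ln_le' => //; lra.
have lk0 : / 2 < ln k.
  apply: Rlt_le_trans ln_lt_2 _; apply: ln_le' => //; lra.
have t1 : 1 <= INR t by rewrite -[1]/(INR 1); apply: INR_leq.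
have k0 : 0 < k by lra.
set A := INR t * ln k / ln x.
set B := INR t / k.
have hA : A * ln x = INR t * ln k by rewrite /A; field; lra.
have hB : B * k = INR t by rewrite /B; field; lra.
have B0 : 0 <= B by rewrite /B; apply: Rle_mult_inv_pos; lra.
case: (Rle_lt_dec (ln x) (2 * INR t * ln k)) => hcase.
  have : /2 <= A.
    rewrite /A; apply: le_div_helper; first lra.
    lra.
  have : INR G / INR N <= 1 by apply: div_le_helper => //; lra.
  lra.
have K0 : (0 < K)%N by apply: ltnW.
set M := Nat.sqrt N.
have [hM1 hM2] := Nat.sqrt_spec' N.
have MN : (M <= N)%N by apply/leP; apply: Nat.sqrt_le_lin.
set c := count (smb K) (iota M.+1 (N - M)).
have hG := count_notgood K t N M K0 MN.
have hGR : INR G <= INR t * (INR t + (INR (N %/ K) + INR M + INR c)).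
  by move/INR_leq: hG; rewrite !INR_muln !INR_addn.
have hq : INR (N %/ K) * INR K <= INR N by rewrite -INR_muln; apply: INR_leq; apply: leq_divM.
have hsm := smooth_bound M N K MN K2.
have Kpos : 2 <= INR K by rewrite -e2; apply: INR_leq.
have m0 : 0 <= INR M by apply: pos_INR.
have hc : INR c * ln (INR M + 1) <= 4 * INR N * ln (INR K).
  move/INR_leq: hsm; rewrite !INR_expn S_INR => h.
  rewrite -ln_pow; last lra.
  have -> : 4 * INR N = INR (4 * N) by rewrite INR_muln; simpl; ring.
  rewrite -ln_pow; last lra.
  apply: ln_le' => //; apply: pow_lt; lra.
have hmm : INR M * INR M <= INR N by rewrite -mult_INR; apply: le_INR.
have hn1 : INR N + 1 <= (INR M + 1) * (INR M + 1).
  by have := le_INR _ _ hM2; rewrite mult_INR !S_INR.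
have M1n : (1 <= M)%coq_nat by move: hM2 N2; rewrite -/M; nia.
have m1 : 1 <= INR M by have := le_INR _ _ M1n.
have hlm : ln (INR M + 1) < INR M.
  have := exp_ineq1 (INR M); rewrite Rplus_comm => h.
  rewrite -{2}(ln_exp (INR M)); apply: ln_increasing; [lra | apply: h; lra].
have hxl : ln x <= 2 * ln (INR M + 1).
  have -> : 2 * ln (INR M + 1) = ln ((INR M + 1) * (INR M + 1)) by rewrite ln_mult; lra.
  apply: ln_le'; lra.
have hLK : ln (INR K) <= ln k by apply: ln_le'; lra.
have hKk : k <= 2 * INR K by lra.
have tL : INR t < ln x by nra.
have lxp : 0 < ln x by lra.
have q0 : 0 <= INR (N %/ K) by apply: pos_INR.
have c0 : 0 <= INR c by apply: pos_INR.
have b1 : INR t * INR (N %/ K) <= 2 * B * INR N.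
  rewrite -hB.
  have : B * k * INR (N %/ K) <= B * (2 * INR K) * INR (N %/ K).
    apply: Rmult_le_compat_r => //; apply: Rmult_le_compat_l => //.
  nra.
have b2 : INR t * INR t <= 8 * A * INR N.
  apply: (Rmult_le_reg_r (ln x)) => //.
  have e : 8 * A * INR N * (ln x) = 8 * INR t * ln k * INR N by rewrite /A; field; lra.
  rewrite e.
  have s1 : INR t * INR t * (ln x) <= INR t * (ln x) * (ln x).
    have := Rmult_le_pos (INR t * ln x) (ln x - INR t); nra.
  have L2m : ln x <= 2 * INR M by lra.
  have s2 : (ln x) * (ln x) <= 4 * INR N.
    have : ln x * ln x <= (2 * INR M) * (2 * INR M) by apply: Rmult_le_compat; lra.
    lra.
  have s3 : INR t * (ln x * ln x) <= INR t * (4 * INR N) by apply: Rmult_le_compat_l; lra.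
  have s4 : INR t * INR N * 1 <= INR t * INR N * (2 * ln k).
    apply: Rmult_le_compat_l; [apply: Rmult_le_pos; lra | lra].
  lra.
have b3 : INR t * INR M <= 4 * A * INR N.
  apply: (Rmult_le_reg_r (ln x)) => //.
  have e : 4 * A * INR N * (ln x) = 4 * INR t * ln k * INR N by rewrite /A; field; lra.
  rewrite e.
  have s1 : INR M * (ln x) <= 2 * INR N.
    have : INR M * ln x <= INR M * (2 * INR M) by apply: Rmult_le_compat_l; lra.
    lra.
  have s3 : INR t * (INR M * ln x) <= INR t * (2 * INR N) by apply: Rmult_le_compat_l; lra.
  have s4 : INR t * INR N * 1 <= INR t * INR N * (2 * ln k).
    apply: Rmult_le_compat_l; [apply: Rmult_le_pos; lra | lra].
  lra.
have b4 : INR t * INR c <= 8 * A * INR N.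
  apply: (Rmult_le_reg_r (ln x)) => //.
  have e : 8 * A * INR N * (ln x) = 8 * INR t * ln k * INR N by rewrite /A; field; lra.
  rewrite e.
  have s1 : INR c * (ln x) <= 8 * INR N * ln k.
    have : INR c * ln x <= INR c * (2 * ln (INR M + 1)) by apply: Rmult_le_compat_l; lra.
    have : 4 * INR N * ln (INR K) <= 4 * INR N * ln k by apply: Rmult_le_compat_l; lra.
    lra.
  have s3 : INR t * (INR c * ln x) <= INR t * (8 * INR N * ln k) by apply: Rmult_le_compat_l; lra.
  lra.
apply: Rle_trans hP _.
apply: div_le_helper => //.
nra.
Qed.
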